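(* Let $\varepsilon \geq \gamma > 0$, and let $H$ be an $n$-vertex $k$-graph with $\delta_{k-1}(H) \geq (1/3 + \varepsilon) n$. Let $G$ be the $\gamma$-diamond graph of $H$. Then the independence number of $G$ satisfies $\alpha(G) \leq 2$.
   Context: $k \geq 2$. $\delta_{k-1}(H)$ is the minimum over $(k-1)$-subsets $S \subseteq V(H)$ of the number of edges containing $S$. For $x, y \in V(H)$, an $(x,y)$-diamond is a pair of edges $e, f$ of $H$ with $|e \cap f| = k-1$, $x \in e\setminus f$, $y \in f \setminus e$. The $\gamma$-diamond graph of an $n$-vertex $k$-graph $H$ is the graph $G$ on $V(H)$ with $xy \in E(G)$ if and only if $H$ contains at least $\gamma\binom{n}{k-1}$ distinct $(x,y)$-diamonds. *)

(* Defs.v *)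
From HB Require Import structures.
From mathcomp Require Import all_boot all_order all_algebra.
Set Implicit Arguments. Unset Strict Implicit. Unset Printing Implicit Defensive.
Import Order.TTheory GRing.Theory Num.Theory.
Local Open Scope ring_scope.

Definition kgraph (V : finType) (k : nat) (E : {set {set V}}) : Prop :=
  forall e, e \in E -> #|e| = k :> nat.

Definition codeg (V : finType) (E : {set {set V}}) (S : {set V}) : nat :=
  #|[set e in E | S \subset e]|.

Definition min_codeg_ge (R : realFieldType) (V : finType) (k : nat)
    (E : {set {set V}}) (d : R) : Prop :=
  forall S : {set V}, #|S| = k.-1 :> nat -> d <= (codeg E S)%:R.

Definition diamonds (V : finType) (k : nat) (E : {set {set V}}) (x y : V)
    : {set {set V} * {set V}} :=
  [set ef | [&& ef.1 \in E, ef.2 \in E, #|ef.1 :&: ef.2| == k.-1 :> nat,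
              (x \in ef.1) && (x \notin ef.2) &
              (y \in ef.2) && (y \notin ef.1)]].

Definition diamond_adj (R : realFieldType) (V : finType) (k : nat)
    (E : {set {set V}}) (gamma : R) (x y : V) : bool :=
  gamma * ('C(#|V|, k.-1))%:R <= (#|diamonds k E x y|)%:R.

Definition independent (V : finType) (adj : V -> V -> bool) (A : {set V}) : Prop :=
  forall x y, x \in A -> y \in A -> x != y -> ~~ adj x y.

Definition indep_number_le (V : finType) (adj : V -> V -> bool) (m : nat) : Prop :=
  forall A : {set V}, independent adj A -> (#|A| <= m)%N.

(* Main.v *)
Require Import Defs.
From HB Require Import structures.
From mathcomp Require Import all_boot all_order all_algebra.
From mathcomp Require Import zify.
From mathcomp Require Import lra.
Import Order.TTheory GRing.Theory Num.Theory.
Set Implicit Arguments. Unset Strict Implicit. Unset Printing Implicit Defensive.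

Lemma inner_cnt (V : finType) (k : nat) (e : {set V}) (x : V) :
  x \in e -> #|e| = k ->
  #|[set S : {set V} | [&& #|S| == k.-1, x \in S & S \subset e]]| = k.-1.
Proof.
move=> xe ek.
have -> : [set S : {set V} | [&& #|S| == k.-1, x \in S & S \subset e]] =
  [set S : {set V} | S \subset e & #|S| == k.-1] :\: [set S : {set V} | S \subset e :\ x & #|S| == k.-1].
  apply/setP => S; rewrite !inE subsetD1.
  by case: (#|S| == k.-1); case: (x \in S); case: (S \subset e).
rewrite cardsDS; last first.
  by apply/subsetP => S0; rewrite !inE subsetD1 => /andP[/andP[-> _] ->].
rewrite !cards_draws (cardsD1 x e) xe in ek *.
rewrite -ek /= binn add1n /=.
case: #|e :\ x| => [|n] //=.
rewrite !add0n; have := @bin_sub n.+2 1 isT; rewrite bin1 subn1 /= => ->; by rewrite subn1.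
Qed.
Lemma dcount (V : finType) (k : nat) (E : {set {set V}}) (x : V) :
  kgraph k E ->
  \sum_(S : {set V} | (#|S| == k.-1) && (x \in S)) codeg E S =
  #|[set e in E | x \in e]| * k.-1.
Proof.
move=> kE.
rewrite -sum_nat_const.
transitivity (\sum_(S : {set V} | (#|S| == k.-1) && (x \in S))
                \sum_(e in E | S \subset e) 1).
  apply: eq_bigr => S _; rewrite /codeg -sum1_card.
  by apply: eq_bigl => e; rewrite inE.
rewrite (exchange_big_dep (fun e => e \in E)) /=; last by move=> S e _ /andP[].
rewrite (bigID (fun e : {set V} => x \in e)) /=.
rewrite [X in _ + X = _]big1 ?addn0; last first.
  move=> e /andP[_ xne]; apply: big1 => S /andP[/andP[_ xS] /andP[_ Se]].
  by rewrite (subsetP Se _ xS) in xne.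
rewrite [RHS](eq_bigl (fun e => (e \in E) && (x \in e))); last by move=> e; rewrite inE.
apply: eq_bigr => e /andP[eE xe].
rewrite sum1_card -[in RHS](inner_cnt xe (kE e eE)).
by apply: eq_card => S; rewrite !inE eE /= unfold_in /= -andbA.
Qed.
Lemma cntx (V : finType) (k : nat) (x : V) : (2 <= k)%N ->
  #|[set S : {set V} | (#|S| == k.-1) && (x \in S)]| * #|V| =
  k.-1 * 'C(#|V|, k.-1).
Proof.
move=> k2.
have hA := cardsID [set S : {set V} | x \in S] [set S : {set V} | #|S| == k.-1].
have -> : [set S : {set V} | (#|S| == k.-1) && (x \in S)] =
  [set S : {set V} | #|S| == k.-1] :&: [set S : {set V} | x \in S].
  by apply/setP => S; rewrite !inE.
have hB : [set S : {set V} | #|S| == k.-1] :\: [set S : {set V} | x \in S] =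
  [set S : {set V} | S \subset [set~ x] & #|S| == k.-1].
  apply/setP => S; rewrite !inE subsetC sub1set andbC.
  by rewrite inE andbC.
rewrite hB cards_draws cardsC1 card_draws in hA; clear hB.
have : (0 < #|V|)%N by apply/card_gt0P; exists x.
case: #|V| hA => [//|n] /=.
case: k k2 => [|[|m]] //= _ hA _.
rewrite binS addnC in hA.
move/eqP: hA; rewrite eqn_add2l => /eqP ->.
by rewrite mulnC -mul_bin_diag.
Qed.

Lemma sumb (T : finType) (P b : pred T) :
  (\sum_(i | P i) (b i : nat))%N = #|[set i | P i && b i]|.
Proof.
rewrite -sum1_card.
rewrite [RHS](eq_bigl (fun i => P i && b i)); last by move=> i; rewrite inE.
rewrite big_mkcondr; apply: eq_bigr => i _; by case: (b i).
Qed.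
Lemma notin_of_edge (V : finType) (k : nat) (E : {set {set V}}) x (S : {set V}) :
  (1 <= k)%N -> kgraph k E -> #|S| = k.-1 -> x |: S \in E -> x \notin S.
Proof.
move=> k1 kE hS /kE; rewrite cardsU1 hS.
case: (x \in S) => //=; lia.
Qed.

Lemma degP (V : finType) (k : nat) (E : {set {set V}}) x :
  (1 <= k)%N -> kgraph k E ->
  (#|[set e in E | x \in e]| <=
   #|[set S : {set V} | (#|S| == k.-1) && (x |: S \in E)]|)%N.
Proof.
move=> k1 kE.
have inj : {in [set e in E | x \in e] &, injective (fun e => e :\ x)}.
  move=> e1 e2; rewrite !inE => /andP[_ h1] /andP[_ h2] he.
  by rewrite -(setD1K h1) -(setD1K h2) he.
rewrite -(card_in_imset inj).
apply: subset_leq_card; apply/subsetP => S /imsetP[e]; rewrite inE => /andP[eE xe] ->.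
rewrite inE setD1K // eE andbT.
by move: (kE e eE); rewrite (cardsD1 x e) xe => <-.
Qed.

Lemma diamP (V : finType) (k : nat) (E : {set {set V}}) x y :
  (1 <= k)%N -> kgraph k E -> x != y ->
  (#|[set S : {set V} | [&& #|S| == k.-1, x |: S \in E & y |: S \in E]]| <=
   #|diamonds k E x y|)%N.
Proof.
move=> k1 kE nxy.
have inj : {in [set S : {set V} | [&& #|S| == k.-1, x |: S \in E & y |: S \in E]] &,
   injective (fun S => (x |: S, y |: S))}.
  move=> S1 S2; rewrite !inE => /and3P[/eqP h1 e1 _] /and3P[/eqP h2 e2 _] [he _].
  by rewrite -(setU1K (notin_of_edge k1 kE h1 e1)) -(setU1K (notin_of_edge k1 kE h2 e2)) he.
rewrite -(card_in_imset inj).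
apply: subset_leq_card; apply/subsetP => p /imsetP[S]; rewrite inE => /and3P[/eqP hS ex ey] ->.
have xS := notin_of_edge k1 kE hS ex.
have yS := notin_of_edge k1 kE hS ey.
rewrite /diamonds inE /=.
have -> : (x |: S) :&: (y |: S) = S.
  apply/setP => v; rewrite !inE.
  case: (eqVneq v x) => [->|]; first by rewrite (negbTE xS) (negbTE nxy).
  by move=> _; case: (v == y); rewrite /= ?andbT ?andbb.
rewrite ex ey hS eqxx /= !inE eqxx /= (negbTE xS) (negbTE yS).
by rewrite eqxx (negbTE nxy) eq_sym (negbTE nxy).
Qed.

Local Open Scope ring_scope.

Lemma Pbound (R : realFieldType) (k : nat) (V : finType)
    (E : {set {set V}}) (t : R) (x : V) :
  (2 <= k)%N -> kgraph k E ->
  min_codeg_ge k E (t * (#|V|)%:R) ->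
  t * ('C(#|V|, k.-1))%:R <=
  (#|[set S : {set V} | (#|S| == k.-1) && (x |: S \in E)]|)%:R.
Proof.
move=> k2 kE hcod.
have k1 : (1 <= k)%N by apply: ltnW.
have d1 := dcount x kE.
have d2 := degP x k1 kE.
have d3 := cntx x k2.
set P := #|[set S : {set V} | (#|S| == k.-1) && (x |: S \in E)]| in d2 *.
set Dg := #|[set e in E | x \in e]| in d1 d2.
set c := #|[set S : {set V} | (#|S| == k.-1) && (x \in S)]| in d3.
have hs : c%:R * (t * (#|V|)%:R) <= (Dg * k.-1)%:R :> R.
  rewrite -d1 natr_sum.
  have -> : c%:R * (t * (#|V|)%:R) =
     \sum_(S : {set V} | (#|S| == k.-1) && (x \in S)) (t * (#|V|)%:R) :> R.
    rewrite /c -sum1dep_card natr_sum mulr_suml.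
    by apply: eq_bigr => S _; rewrite mul1r.
  by apply: ler_sum => S /andP[/eqP hS _]; apply: hcod.
have K0 : 0 < (k.-1)%:R :> R by rewrite ltr0n; clear -k2; case: k k2 => [|[|]].
rewrite -(ler_pM2l K0).
apply: (le_trans (y := (Dg * k.-1)%:R)); last first.
  by rewrite natrM mulrC ler_pM2l // ler_nat.
apply: le_trans hs.
rewrite mulrCA -natrM -d3 natrM.
by rewrite mulrCA.
Qed.

Lemma key3 (V : finType) (Q : pred {set V}) (a b c : pred {set V}) :
  (\sum_(S | Q S) (a S : nat) + \sum_(S | Q S) (b S : nat) + \sum_(S | Q S) (c S : nat)
   <= \sum_(S | Q S) 1 + \sum_(S | Q S) ((a S && b S) : nat)
      + \sum_(S | Q S) ((b S && c S) : nat) + \sum_(S | Q S) ((a S && c S) : nat))%N.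
Proof.
rewrite -!big_split /=; apply: leq_sum => S _.
by case: (a S); case: (b S); case: (c S).
Qed.

Theorem lemma7p2 (R : realFieldType) (k : nat) (V : finType)
    (E : {set {set V}}) (eps gamma : R) :
  (2 <= k)%N -> 0 < gamma -> gamma <= eps ->
  kgraph k E ->
  min_codeg_ge k E (((3%:R)^-1 + eps) * (#|V|)%:R) ->
  indep_number_le (diamond_adj k E gamma) 2.
Proof.
move=> k2 g0 ge kE hcod A indA.
rewrite leqNgt; apply/negP => /card_gt2P [x [y [z [[xA yA zA] [nxy nyz nzx]]]]].
have nxz : x != z by rewrite eq_sym.
have k1 : (1 <= k)%N by apply: ltnW.
have adj u v : u \in A -> v \in A -> u != v ->
   (#|[set S : {set V} | [&& #|S| == k.-1, u |: S \in E & v |: S \in E]]|)%:R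
     < gamma * ('C(#|V|, k.-1))%:R.
  move=> uA vA nuv; have := indA u v uA vA nuv; rewrite /diamond_adj -ltNge => h.
  by apply: le_lt_trans h; rewrite ler_nat; apply: diamP.
have Dxy := adj x y xA yA nxy.
have Dyz := adj y z yA zA nyz.
have Dxz := adj x z xA zA nxz.
have Px := Pbound x k2 kE hcod.
have Py := Pbound y k2 kE hcod.
have Pz := Pbound z k2 kE hcod.
have hk := key3 (fun S : {set V} => #|S| == k.-1) (fun S => x |: S \in E)
   (fun S => y |: S \in E) (fun S => z |: S \in E).
rewrite !sumb sum1dep_card card_draws in hk.
move: hk; rewrite -(ler_nat R) !natrD.
set C := ('C(#|V|, k.-1))%:R in Dxy Dyz Dxz Px Py Pz *.
move=> hk.
have C0 : 0 <= C by rewrite ler0n.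
have gC : gamma * C <= eps * C by rewrite ler_wpM2r.
have t3 : 3%:R * (3%:R^-1 * C) = C :> R by rewrite mulrA mulfV ?mulr1 // ?mul1r // pnatr_eq0.
rewrite mulrDl in Px Py Pz.
lra.
Qed.
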